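(* Let $q$ be a prime power, $n=q^4-1$, and let $I_x=\{x,y\}$ be a cyclotomic coset of cardinality $2$ whose minimal representative is $x=(a_0,a_1,a_2,a_3)$. Then $qx>qy$ if and only if $a_2>a_0$, or $a_2=a_0$ and $a_1>a_3$; and $qx<qy$ if and only if $a_2<a_0$, or $a_2=a_0$ and $a_1<a_3$ (where $qx,qy$ are reduced modulo $n$ into $\{0,\ldots,n-1\}$).
   Context: Identify $\mathbb{Z}_n$ with $\{0,\ldots,n-1\}$. The $q$-adic 4-tuple $(a_0,a_1,a_2,a_3)$ denotes $a_0+a_1q+a_2q^2+a_3q^3$ with $0\le a_i<q$. The cyclotomic coset of $x$ with respect to $q^2$ is $I_x=\{x,\,q^2x\bmod n\}$; its minimal representative is its least element. *)

(* Defs.v *)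
From mathcomp Require Import all_boot.
Set Implicit Arguments. Unset Strict Implicit. Unset Printing Implicit Defensive.

Definition prime_power (q : nat) : Prop :=
  exists p k, prime p /\ 0 < k /\ q = p ^ k.

(* Z_n identified with {0,...,n-1}; cyclotomic coset of x w.r.t. q^2 *)
Definition cyc_coset (n q x : nat) : seq nat := undup [:: x; (q ^ 2 * x) %% n].

(* Main.v *)
Require Import Defs.
From mathcomp Require Import all_boot zify.

Lemma lex2 (q a a' B B' : nat) : a < q -> a' < q ->
  (a + q * B < a' + q * B') <-> (B < B' \/ (B = B' /\ a < a')).
Proof.
move=> ha ha'; split.
- move=> h. case: (ltngtP B B') => hB; [by left| |right; split; [done|lia]].
  exfalso. have : q * B'.+1 <= q * B by rewrite leq_mul2l hB orbT.
  rewrite mulnS.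
  lia.
- case=> [hB|[-> h]]; last lia.
  have : q * B.+1 <= q * B' by rewrite leq_mul2l hB orbT.
  rewrite mulnS.
  lia.
Qed.

Lemma eq2 (q a a' B B' : nat) : a < q -> a' < q ->
  (a + q * B = a' + q * B') <-> (B = B' /\ a = a').
Proof.
move=> ha ha'; split; last by case=> -> ->.
move=> e. have := @lex2 q a a' B B' ha ha'. have := @lex2 q a' a B' B ha' ha. lia.
Qed.

Definition H q a b c d := a + q * (b + q * (c + q * d)).

Lemma Hlt q a b c d a' b' c' d' : a < q -> b < q -> c < q -> d < q ->
  a' < q -> b' < q -> c' < q -> d' < q ->
  H q a b c d < H q a' b' c' d' <->
  (d < d' \/ (d = d' /\ (c < c' \/ (c = c' /\ (b < b' \/ (b = b' /\ a < a')))))).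
Proof.
move=> *; rewrite /H lex2 // lex2 // lex2 // eq2 // eq2 // eq2 //. lia.
Qed.

Lemma Hle q a b c d : a < q -> b < q -> c < q -> d < q -> H q a b c d <= q ^ 4 - 1.
Proof.
move=> ha hb hc hd.
have step : forall a B M, a < q -> B < M -> a + q * B < q * M.
  move=> a1 B M h1 h2. have : q * B.+1 <= q * M by rewrite leq_mul2l h2 orbT.
  rewrite mulnS; lia.
have := step _ _ _ ha (step _ _ _ hb (step _ _ _ hc hd)).
rewrite /H !expnS expn0 muln1 !mulnA; lia.
Qed.

Lemma Hrot q a b c d : 1 < q -> a < q -> b < q -> c < q -> d < q ->
  H q a b c d < q ^ 4 - 1 ->
  (q * H q a b c d) %% (q ^ 4 - 1) = H q d a b c.
Proof.
move=> q1 ha hb hc hd hl.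
have e : q * H q a b c d = d * (q ^ 4 - 1) + H q d a b c.
  rewrite /H. have : 1 <= q ^ 4 by rewrite expn_gt0; lia. 
  rewrite !expnS expn0 => h. nia.
rewrite e modnMDl modn_small //.
have := @Hle q a b c d ha hb hc hd. have := @Hle q d a b c hd ha hb hc.
have En : q ^ 4 - 1 = H q (q.-1) (q.-1) (q.-1) (q.-1).
  rewrite /H. have : 1 <= q ^ 4 by rewrite expn_gt0; lia.
  rewrite !expnS expn0 => h. nia.
rewrite En in hl *. move=> h1 h2.
rewrite ltn_neqAle h1 andbT; apply/eqP => ee.
move: hl; rewrite Hlt; try lia.
move: ee; rewrite /H eq2 ?eq2; lia.
Qed.

Theorem mainTheorem11 (q x y a0 a1 a2 a3 : nat) :
  prime_power q ->
  let n := q ^ 4 - 1 in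
  x < n ->
  (* I_x = {x, y} has cardinality 2 *)
  y = (q ^ 2 * x) %% n ->
  size (cyc_coset n q x) = 2 ->
  (* x is the minimal representative of I_x *)
  (forall z, z \in cyc_coset n q x -> x <= z) ->
  (* q-adic expansion x = (a0,a1,a2,a3) *)
  a0 < q -> a1 < q -> a2 < q -> a3 < q ->
  x = a0 + a1 * q + a2 * q ^ 2 + a3 * q ^ 3 ->
  (((q * y) %% n < (q * x) %% n) <-> (a0 < a2 \/ (a2 = a0 /\ a3 < a1))) /\
  (((q * x) %% n < (q * y) %% n) <-> (a2 < a0 \/ (a2 = a0 /\ a1 < a3))).
Proof.
move=> _ n hxn hy _ _ h0 h1 h2 h3 hx.
have q1 : 1 < q.
  rewrite ltnNge; apply/negP => hq.
  have eq1 : q = 1 by lia.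
  by move: hxn; rewrite /n eq1.
have xH : x = H q a0 a1 a2 a3.
  rewrite hx /H !expnS expn0 !muln1 !mulnDr !mulnA !addnA.
  by congr (_ + _ + _ + _); rewrite [RHS]mulnC ?mulnA.
have n0 : 0 < n by lia.
have Hx : (q * x) %% n = H q a3 a0 a1 a2 by rewrite xH Hrot // -xH.
have Hy : y = H q a2 a3 a0 a1.
  rewrite hy expnS expn1 -mulnA -modnMmr Hx Hrot //.
  by rewrite -Hx ltn_pmod.
have Hqy : (q * y) %% n = H q a1 a2 a3 a0.
  by rewrite Hy Hrot // -Hy hy ltn_pmod.
rewrite Hx Hqy !Hlt //; lia.
Qed.
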